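(* Let $A$ be a Banach algebra and $\phi\in\Delta(A)$. Suppose $A$ is approximately left $\phi$-biprojective and there is an element $a_0\in A$ with $aa_0=a_0a$ for all $a\in A$ and $\phi(a_0)=1$. Then $A$ is approximately left $\phi$-amenable.
   Context: For a Banach algebra $A$, $\Delta(A)$ denotes the set of nonzero multiplicative linear functionals (characters) on $A$. $A\otimes_p A$ is the projective tensor product, a Banach $A$-bimodule via $a\cdot(b\otimes c)=ab\otimes c$, $(b\otimes c)\cdot a=b\otimes ca$; $\pi_A:A\otimes_pA\to A$ is the bounded linear map with $\pi_A(a\otimes b)=ab$. For $\phi\in\Delta(A)$, $A$ is approximately left $\phi$-biprojective if there is a net $(\rho_\alpha)$ of bounded linear maps $A\to A\otimes_pA$ such that for all $a,x\in A$: (i) $\|a\cdot\rho_\alpha(x)-\rho_\alpha(ax)\|\to0$; (ii) $\|\rho_\alpha(xa)-\phi(a)\rho_\alpha(x)\|\to0$; (iii) $\phi(\pi_A(\rho_\alpha(x)))-\phi(x)\to0$. $A$ is approximately left $\phi$-amenable if there is a (not necessarily bounded) net $(a_\alpha)$ in $A$ with $\|aa_\alpha-\phi(a)a_\alpha\|\to0$ for all $a\in A$ and $\phi(a_\alpha)\to1$. *)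

(* Defs.v *)
(* Scalars: an arbitrary numFieldType K (covers R and C). *)
From HB Require Import structures.
From mathcomp Require Import all_boot all_order all_algebra.
Set Implicit Arguments. Unset Strict Implicit. Unset Printing Implicit Defensive.
Import Order.TTheory GRing.Theory Num.Theory.
Local Open Scope ring_scope.

HB.mixin Record Lmodule_isNormedSpace (K : numFieldType) V
    of GRing.Lmodule K V & Num.NormedZmodule K V := {
  normZ_ : forall (k : K) (v : V), `|k *: v| = `|k| * `|v|
}.
#[short(type="normedSpaceType")]
HB.structure Definition NormedSpace (K : numFieldType) :=
  { V of Lmodule_isNormedSpace K V & GRing.Lmodule K V & Num.NormedZmodule K V }.

HB.mixin Record NormedSpace_isComplete (K : numFieldType) V of NormedSpace K V := {
  complete_ : forall u : nat -> V,
    (forall e : K, 0 < e -> exists N, forall m n, (N <= m)%N -> (N <= n)%N ->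
        `|u m - u n| < e) ->
    exists l : V, forall e : K, 0 < e -> exists N, forall n, (N <= n)%N ->
        `|u n - l| < e
}.
#[short(type="banachSpaceType")]
HB.structure Definition BanachSpace (K : numFieldType) :=
  { V of NormedSpace_isComplete K V & NormedSpace K V }.

HB.mixin Record BanachSpace_isBanachAlgebra (K : numFieldType) A of BanachSpace K A := {
  bmul : A -> A -> A;
  bmulA : forall a b c, bmul a (bmul b c) = bmul (bmul a b) c;
  bmulDl : forall a b c, bmul (a + b) c = bmul a c + bmul b c;
  bmulDr : forall a b c, bmul a (b + c) = bmul a b + bmul a c;
  bmulZl : forall (k : K) a b, bmul (k *: a) b = k *: bmul a b;
  bmulZr : forall (k : K) a b, bmul a (k *: b) = k *: bmul a b;
  norm_bmul : forall a b, `|bmul a b| <= `|a| * `|b|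
}.
#[short(type="banachAlgebraType")]
HB.structure Definition BanachAlgebra (K : numFieldType) :=
  { A of BanachSpace_isBanachAlgebra K A & BanachSpace K A }.

Section Defs.
Variable K : numFieldType.

Definition is_linear (U V : lmodType K) (f : U -> V) :=
  (forall x y, f (x + y) = f x + f y) /\ (forall (k : K) x, f (k *: x) = k *: f x).

Definition bounded_linear (U V : normedSpaceType K) (f : U -> V) :=
  is_linear f /\ exists C : K, forall x, `|f x| <= C * `|x|.

Definition is_bilinear (U V W : lmodType K) (b : U -> V -> W) :=
  (forall y, is_linear (fun x => b x y)) /\ (forall x, is_linear (b x)).

Definition is_character (A : banachAlgebraType K) (phi : A -> K) :=
  (forall x y, phi (x + y) = phi x + phi y) /\
  (forall (k : K) x, phi (k *: x) = k * phi x) /\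
  (forall x y, phi (bmul x y) = phi x * phi y) /\
  (exists x, phi x != 0).

(* E with the bilinear map tens is the projective tensor product A (x)_p A,
   characterised (up to isometric isomorphism) by its universal property:
   every bounded bilinear map beta with ||beta(a,b)|| <= C||a|| ||b|| into a
   Banach space factors uniquely through a bounded linear T of norm <= C. *)
Definition is_proj_tensor (A : banachAlgebraType K) (E : banachSpaceType K)
    (tens : A -> A -> E) :=
  is_bilinear tens /\
  (forall a b, `|tens a b| <= `|a| * `|b|) /\
  (forall (F : banachSpaceType K) (beta : A -> A -> F) (C : K),
     is_bilinear beta -> (forall a b, `|beta a b| <= C * `|a| * `|b|) ->
     exists T : E -> F,
       [/\ is_linear T, (forall a b, T (tens a b) = beta a b),
           (forall u, `|T u| <= C * `|u|) &
           (forall T' : E -> F, bounded_linear T' ->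
               (forall a b, T' (tens a b) = beta a b) -> forall u, T' u = T u)]).

Definition proj_tensor_bimodule (A : banachAlgebraType K) (E : banachSpaceType K)
    (tens : A -> A -> E) (lact : A -> E -> E) (ract : E -> A -> E) (piA : E -> A) :=
  [/\ is_proj_tensor tens,
      (forall a, bounded_linear (lact a)) /\
        (forall a b c, lact a (tens b c) = tens (bmul a b) c),
      (forall a, bounded_linear (fun u => ract u a)) /\
        (forall a b c, ract (tens b c) a = tens b (bmul c a)) &
      bounded_linear piA /\ (forall a b, piA (tens a b) = bmul a b)].

Record directed := Directed {
  dI :> Type;
  dle : dI -> dI -> Prop;
  dle_refl : forall i, dle i i;
  dle_trans : forall i j k, dle i j -> dle j k -> dle i k;
  dle_dir : forall i j, exists k, dle i k /\ dle j k;
  d_inhab : inhabited dI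
}.

Definition net_to0 (D : directed) (f : D -> K) :=
  forall e : K, 0 < e -> exists i0 : D, forall i : D, dle i0 i -> `|f i| < e.

Definition approx_left_phi_biprojective (A : banachAlgebraType K) (phi : A -> K)
    (E : banachSpaceType K) (tens : A -> A -> E) (lact : A -> E -> E)
    (ract : E -> A -> E) (piA : E -> A) :=
  exists (D : directed) (rho : D -> A -> E),
    (forall i, bounded_linear (rho i)) /\
    (forall a x, net_to0 (fun i => `|lact a (rho i x) - rho i (bmul a x)|)) /\
    (forall a x, net_to0 (fun i => `|rho i (bmul x a) - phi a *: rho i x|)) /\
    (forall x, net_to0 (fun i => phi (piA (rho i x)) - phi x)).

Definition approx_left_phi_amenable (A : banachAlgebraType K) (phi : A -> K) :=
  exists (D : directed) (a : D -> A),
    (forall x, net_to0 (fun i => `|bmul x (a i) - phi x *: a i|)) /\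
    net_to0 (fun i => phi (a i) - 1).

End Defs.

(* Main.v *)
Require Import Defs.
From HB Require Import structures.
From mathcomp Require Import all_boot all_order all_algebra.
From mathcomp Require Import ring lra.
Import Order.TTheory GRing.Theory Num.Theory.
Local Open Scope ring_scope.

Section Helpers.
Variable K : numFieldType.

Lemma bl_pos (U V : normedSpaceType K) (f : U -> V) :
  bounded_linear f -> exists C : K, 0 < C /\ forall x, `|f x| <= C * `|x|.
Proof.
move=> [_ [C HC]]; exists (`|C| + 1); split.
  by apply: (lt_le_trans ltr01); rewrite lerDr.
move=> x; apply: (le_trans (HC x)).
have h0 : 0 <= C * `|x| := le_trans (normr_ge0 _) (HC x).
rewrite -(ger0_norm h0) normrM normr_id; apply: ler_wpM2r => //.
by rewrite lerDl.
Qed.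

Lemma lin_sub (U V : lmodType K) (f : U -> V) :
  is_linear f -> forall u v, f (u - v) = f u - f v.
Proof.
move=> [Hd Hs] u v; rewrite -scaleN1r Hd Hs; by rewrite scaleN1r.
Qed.

Lemma net_comb (D : directed) (f g h : D -> K) (M : K) :
  0 < M -> net_to0 f -> net_to0 g ->
  (forall i, `|h i| <= M * (`|f i| + `|g i|)) -> net_to0 h.
Proof.
move=> M0 Hf Hg Hh e e0.
have M2 : M + M != 0 by rewrite -mulr2n mulrn_eq0 /=; exact: lt0r_neq0.
have e'0 : 0 < e / (M + M) by rewrite divr_gt0 // addr_gt0.
have [i1 H1] := Hf _ e'0; have [i2 H2] := Hg _ e'0.
have [k [k1 k2]] := dle_dir i1 i2.
exists k => i ki; apply: (le_lt_trans (Hh i)).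
have -> : e = M * (e / (M + M) + e / (M + M)) by field.
rewrite ltr_pM2l //; apply: ltrD.
  exact: H1 (dle_trans k1 ki).
exact: H2 (dle_trans k2 ki).
Qed.

End Helpers.

Theorem proposition2p1 (K : numFieldType) (A : banachAlgebraType K) (phi : A -> K)
    (E : banachSpaceType K) (tens : A -> A -> E) (lact : A -> E -> E)
    (ract : E -> A -> E) (piA : E -> A) :
  is_character phi ->
  proj_tensor_bimodule tens lact ract piA ->
  approx_left_phi_biprojective phi tens lact ract piA ->
  (exists a0 : A, (forall a : A, bmul a a0 = bmul a0 a) /\ phi a0 = 1) ->
  approx_left_phi_amenable phi.
Proof.
move=> _ [[_ [_ Huniv]] [Hlb Hlt] _ [Hpb Hpt]] [D [rho [Hrb [H1 [H2 H3]]]]]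
  [a0 [Hc Hphi]].
have [Cp [Cp0 HCp]] := @bl_pos K _ _ _ Hpb.
have Hpl := Hpb.1.
have Hpact : forall x u, piA (lact x u) = bmul x (piA u).
  move=> x u.
  have Hbil : is_bilinear (fun a b : A => bmul x (bmul a b)).
    split=> [y|z]; split.
    - by move=> a b; rewrite bmulDl bmulDr.
    - by move=> k a; rewrite bmulZl bmulZr.
    - by move=> a b; rewrite bmulDr bmulDr.
    - by move=> k a; rewrite bmulZr bmulZr.
  have Hbd : forall a b, `|bmul x (bmul a b)| <= `|x| * `|a| * `|b|.
    move=> a b; apply: (le_trans (norm_bmul _ _)).
    rewrite -mulrA; apply: ler_wpM2l => //; exact: norm_bmul.
  have [T [_ _ _ Tu]] := Huniv A _ _ Hbil Hbd.
  have [Cl [Cl0 HCl]] := @bl_pos K _ _ _ (Hlb x).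
  rewrite (Tu (fun u => piA (lact x u))); last first.
  - by move=> a b; rewrite Hlt Hpt bmulA.
  - split.
      split=> [y z|k y]; first by rewrite (Hlb x).1.1 Hpl.1.
      by rewrite (Hlb x).1.2 Hpl.2.
    exists (Cp * Cl) => y; apply: (le_trans (HCp _)).
    rewrite -mulrA; apply: ler_wpM2l; [exact: ltW | exact: HCl].
  rewrite (Tu (fun u => bmul x (piA u))) //; last first.
    by move=> a b; rewrite Hpt.
  split.
    split=> [y z|k y]; first by rewrite Hpl.1 bmulDr.
    by rewrite Hpl.2 bmulZr.
  exists (`|x| * Cp) => y; apply: (le_trans (norm_bmul _ _)).
  rewrite -mulrA; apply: ler_wpM2l => //; exact: HCp.
exists D, (fun i => piA (rho i a0)); split; last first.
  by have := H3 a0; rewrite Hphi.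
move=> x.
apply: (@net_comb K _ _ _ _ _ Cp0 (H1 x a0) (H2 x a0)) => i.
rewrite !normr_id.
set u1 := lact x (rho i a0) - rho i (bmul x a0).
set u2 := rho i (bmul a0 x) - phi x *: rho i a0.
have -> : bmul x (piA (rho i a0)) - phi x *: piA (rho i a0) = piA u1 + piA u2.
  rewrite /u1 /u2 !(@lin_sub K _ _ _ Hpl) Hpact Hpl.2 Hc.
  by rewrite addrA subrK.
apply: (le_trans (ler_normD _ _)); rewrite mulrDr.
by apply: lerD; apply: HCp.
Qed.
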